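(* Let $N$, $\mathfrak h$, $\alpha_i$, $\mathcal A$, $F$, $v_1,\dots,v_r$ be as in the context. Problem 1 has a solution if and only if Problem 2 has a solution.
   Context: A generalised Cartan matrix is $N=[n(i,j)]_{1\le i,j\le r}$ with $n(i,j)\in\mathbb Z$, $n(i,i)=2$, $n(i,j)\le 0$ for $i\neq j$, and $n(i,j)=0\iff n(j,i)=0$. Let $s$ be the corank of $N$, $\mathfrak h$ the complex vector space with basis $H_1,\dots,H_{r+s}$, and $\alpha_1,\dots,\alpha_r\in\mathfrak h^*$ linearly independent with $\alpha_j(H_i)=n(i,j)$ for $1\le i,j\le r$. $\mathcal A$ is a complex commutative algebra, $\mathrm{Der}(\mathcal A)$ its Lie algebra of derivations; for $a\in\mathcal A$, $D\in\mathrm{Der}(\mathcal A)$, $aD$ is $b\mapsto aD(b)$. $F:\mathfrak h\to\mathrm{Der}(\mathcal A)$ is a Lie algebra homomorphism and $v_1,\dots,v_r\in\mathcal A$ are invertible with $F(H)(v_i)=\alpha_i(H)v_i$ for all $H\in\mathfrak h$. For $\delta_1,\dots,\delta_r,\delta_{-1},\dots,\delta_{-r}\in\mathrm{Im}\,F$ put $\mathbf X_i=v_i\delta_i$, $\mathbf X_{-i}=v_i^{-1}\delta_{-i}$, $\mathbf H_a=F(H_a)$, and consider the relations: (a) $[\mathbf H_a,\mathbf H_b]=0$; (b) $[\mathbf X_i,\mathbf X_{-i}]=\mathbf H_i$ and $[\mathbf X_i,\mathbf X_{-j}]=0$ for $i\ne j$; (c) $[\mathbf H_a,\mathbf X_{\pm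 j}]=\pm\alpha_j(H_a)\mathbf X_{\pm j}$; (d) $\mathrm{ad}(\mathbf X_i)^{1-n(i,j)}(\mathbf X_j)=0$ for $i\ne j$; (e) $\mathrm{ad}(\mathbf X_{-i})^{1-n(i,j)}(\mathbf X_{-j})=0$ for $i\ne j$. Problem 1 has a solution if such $\delta$'s exist satisfying (a)–(e); Problem 2 has a solution if such $\delta$'s exist satisfying (a)–(c). *)

(* Defs.v *)
From HB Require Import structures.
From mathcomp Require Import all_boot all_order all_algebra.
From mathcomp Require Import complex.
From mathcomp Require Import reals.
Set Implicit Arguments. Unset Strict Implicit. Unset Printing Implicit Defensive.
Import Order.TTheory GRing.Theory Num.Theory.
Local Open Scope ring_scope.

Definition gen_cartan (r : nat) (N : 'M[int]_r) : Prop :=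
  (forall i, N i i = 2) /\
  (forall i j, i != j -> N i j <= 0) /\
  (forall i j, N i j = 0 <-> N j i = 0).

Section Ops.
Variables (K : fieldType) (A : comAlgType K).

Definition is_derivation (D : A -> A) : Prop :=
  (forall (c : K) (a b : A), D (c *: a + b) = c *: D a + D b) /\
  (forall a b : A, D (a * b) = a * D b + D a * b).

Definition lieb (D E : A -> A) : A -> A := fun b => D (E b) - E (D b).

Definition zeroop : A -> A := fun _ => 0.
Definition scaleop (c : K) (D : A -> A) : A -> A := fun b => c *: D b.
Definition mulop (a : A) (D : A -> A) : A -> A := fun b => a * D b.

End Ops.

Section Problems.
Variables (K : fieldType) (A : comAlgType K) (r s : nat).
Variables (N : 'M[int]_r) (al : 'M[K]_(r, r + s)) (F : 'rV[K]_(r + s) -> A -> A)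
          (v vinv : 'I_r -> A).

(* basis H_1, ..., H_(r+s) of h = K^(r+s) *)
Definition hbasis (a : 'I_(r + s)) : 'rV[K]_(r + s) := delta_mx 0 a.
(* alpha_j as a linear form on h; al j a = alpha_j(H_a) *)
Definition alphaf (j : 'I_r) (H : 'rV[K]_(r + s)) : K := (H *m al^T) 0 j.

Definition inImF (D : A -> A) : Prop := exists H, D = F H.

Definition HH (a : 'I_(r + s)) : A -> A := F (hbasis a).
Definition Xp (dp : 'I_r -> A -> A) (i : 'I_r) : A -> A := mulop (v i) (dp i).
Definition Xm (dm : 'I_r -> A -> A) (i : 'I_r) : A -> A := mulop (vinv i) (dm i).

Definition relations_abc (dp dm : 'I_r -> A -> A) : Prop :=
  (forall a b, lieb (HH a) (HH b) = (@zeroop _ A)) /\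
  (forall i, lieb (Xp dp i) (Xm dm i) = HH (lshift s i)) /\
  (forall i j, i != j -> lieb (Xp dp i) (Xm dm j) = (@zeroop _ A)) /\
  (forall a j, lieb (HH a) (Xp dp j) = scaleop (alphaf j (hbasis a)) (Xp dp j)) /\
  (forall a j, lieb (HH a) (Xm dm j) = scaleop (- alphaf j (hbasis a)) (Xm dm j)).

Definition relations_de (dp dm : 'I_r -> A -> A) : Prop :=
  (forall i j, i != j ->
     iter `|1 - N i j|%N (lieb (Xp dp i)) (Xp dp j) = (@zeroop _ A)) /\
  (forall i j, i != j ->
     iter `|1 - N i j|%N (lieb (Xm dm i)) (Xm dm j) = (@zeroop _ A)).

Definition deltas_in_ImF (dp dm : 'I_r -> A -> A) : Prop :=
  (forall i, inImF (dp i)) /\ (forall i, inImF (dm i)).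

Definition Problem1 : Prop :=
  exists dp dm : 'I_r -> A -> A,
    deltas_in_ImF dp dm /\ relations_abc dp dm /\ relations_de dp dm.

Definition Problem2 : Prop :=
  exists dp dm : 'I_r -> A -> A,
    deltas_in_ImF dp dm /\ relations_abc dp dm.

End Problems.

(* Main.v *)
Require Import Defs.
From HB Require Import structures.
From mathcomp Require Import all_boot all_order all_algebra.
From mathcomp Require Import complex.
From mathcomp Require Import reals.
From mathcomp Require Import ring.
From mathcomp Require Import boolp.
Import Order.TTheory GRing.Theory Num.Theory.
Set Implicit Arguments. Unset Strict Implicit. Unset Printing Implicit Defensive.
Local Open Scope ring_scope.

Section Scal.
Variable K : numFieldType.

Lemma z_of (x y : K) : x = 0 -> y = - x -> y = 0.
Proof. by move=> -> ->; rewrite oppr0. Qed.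

Lemma nzmul (x y : K) : x * y = 0 -> x != 0 -> y = 0.
Proof. by move/eqP; rewrite mulf_eq0 => /orP [/eqP->|/eqP] //; rewrite eqxx. Qed.

Lemma add0E (x y : K) : x + y = 0 -> x = - y.
Proof. by move/eqP; rewrite addr_eq0 => /eqP. Qed.

Lemma prod_m1 (x y : K) : x * y = -1 -> x != 0 /\ y != 0.
Proof.
move=> h; split; apply/eqP => e; move: h; rewrite e ?mul0r ?mulr0 => /eqP;
  by rewrite eq_sym oppr_eq0 oner_eq0.
Qed.

Lemma pm_of (x y : K) : - x * y - y * x = 2 -> x * y = -1.
Proof.
move=> h.
have e0 : 2 - (- x * y - y * x) = 0 by rewrite h subrr.
have e : (2 : K) * (x * y + 1) = 0 by rewrite -e0; ring.
apply: add0E; apply: (nzmul e); by rewrite pnatr_eq0.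
Qed.

Lemma cases_lemma (Pii Pji Pij Pjj Mii Mji Mij Mjj nij : K)
  (h1 : - Pji * Mjj - Mij * Pji = 0)
  (h2 : - Pji * Mij - Mij * Pii = 0)
  (h3 : - Pij * Mii - Mji * Pij = 0)
  (h4 : - Pij * Mji - Mji * Pjj = 0)
  (h5 : - Pii * Mii - Mii * Pii = 2)
  (h6 : - Pii * Mji - Mii * Pji = nij)
  (h7 : - Pjj * Mjj - Mjj * Pjj = 2) :
  [\/ [/\ Pji = - Pii, Mji = - Mii & nij = -2],
      [/\ Pji = - Pii, Pij = 0, Mji = 0 & nij = -1],
      [/\ Pji = 0, Mji = - Mii, Mij = 0 & nij = -1] |
      [/\ Pji = 0, Mji = 0 & nij = 0]].
Proof.
have PMi := pm_of h5; have PMj := pm_of h7.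
have [nPi nMi] := prod_m1 PMi; have [nPj nMj] := prod_m1 PMj.
case: (eqVneq Pji 0) => hP; case: (eqVneq Mji 0) => hM.
- by apply: Or44; split => //; rewrite -h6 hP hM; ring.
- have e4 : Mji * (Pij + Pjj) = 0 by apply: (z_of h4); ring.
  have ePij := add0E (nzmul e4 hM).
  have nPij : Pij != 0 by rewrite ePij oppr_eq0.
  have e3 : Pij * (Mii + Mji) = 0 by apply: (z_of h3); ring.
  have eMji : Mji = - Mii by apply: add0E; rewrite addrC; apply: (nzmul e3 nPij).
  have e2 : Pii * Mij = 0 by apply: (z_of h2); rewrite hP; ring.
  have eMij := nzmul e2 nPi.
  apply: Or43; split => //; rewrite -h6 hP eMji -[-1]PMi; ring.
- have e1 : Pji * (Mjj + Mij) = 0 by apply: (z_of h1); ring.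
  have eMjj := add0E (nzmul e1 hP).
  have nMij : Mij != 0 by apply: contra nMj; rewrite eMjj => /eqP ->; rewrite oppr0.
  have e2 : Mij * (Pji + Pii) = 0 by apply: (z_of h2); ring.
  have ePji := add0E (nzmul e2 nMij).
  have e3 : Mii * Pij = 0 by apply: (z_of h3); rewrite hM; ring.
  have ePij := nzmul e3 nMi.
  apply: Or42; split => //; rewrite -h6 ePji hM -[-1]PMi; ring.
- have e1 : Pji * (Mjj + Mij) = 0 by apply: (z_of h1); ring.
  have eMjj := add0E (nzmul e1 hP).
  have nMij : Mij != 0 by apply: contra nMj; rewrite eMjj => /eqP ->; rewrite oppr0.
  have e2 : Mij * (Pji + Pii) = 0 by apply: (z_of h2); ring.
  have ePji := add0E (nzmul e2 nMij).
  have e4 : Mji * (Pij + Pjj) = 0 by apply: (z_of h4); ring.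
  have ePij := add0E (nzmul e4 hM).
  have nPij : Pij != 0 by rewrite ePij oppr_eq0.
  have e3 : Pij * (Mii + Mji) = 0 by apply: (z_of h3); ring.
  have eMji : Mji = - Mii by apply: add0E; rewrite addrC; apply: (nzmul e3 nPij).
  apply: Or41; split => //; rewrite -h6 ePji eMji.
  have -> : -2 = (-1 : K) + -1 by ring.
  rewrite -{1}PMi; rewrite -PMi; ring.
Qed.


Fixpoint xy (a b c : K) (n : nat) : K * K :=
  match n with
  | 0 => (1, 0)
  | n'.+1 => let: (x, y) := xy a b c n' in
      ((n'%:R * a + b) * x, (n'%:R * a + b) * y - (x * c + y * a))
  end.

Lemma xy1 a b c : b = 0 -> c = 0 -> xy a b c 1 = (0, 0).
Proof. by move=> -> -> /=; congr pair; ring. Qed.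

Lemma xy2 a b c : b = 0 \/ (b = - a /\ c = 0) -> xy a b c 2 = (0, 0).
Proof. by case=> [->|[-> ->]] /=; congr pair; ring. Qed.

Lemma xy3 a b c : b = - a -> xy a b c 3 = (0, 0).
Proof. by move=> -> /=; congr pair; ring. Qed.

Lemma kv3 (z : int) : z%:~R = -2 :> K -> `|1 - z|%N = 3%N.
Proof. move=> h. have -> : z = -2. apply: (@intr_inj K). by rewrite h rmorphN. by []. Qed.
Lemma kv2 (z : int) : z%:~R = -1 :> K -> `|1 - z|%N = 2%N.
Proof. move=> h. have -> : z = -1. apply: (@intr_inj K). by rewrite h rmorphN. by []. Qed.
Lemma kv0 (z : int) : z%:~R = 0 :> K -> z = 0.
Proof. move=> h. apply: (@intr_inj K). by rewrite h. Qed.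
Lemma m2nz : (-2 : K) != 0.
Proof. by rewrite oppr_eq0 pnatr_eq0. Qed.
Lemma m1nz : (-1 : K) != 0.
Proof. by rewrite oppr_eq0 oner_eq0. Qed.

End Scal.
Section Aux.
Variables (R : realType) (r s : nat) (al : 'M[R[i]]_(r, r + s)) (A : comAlgType R[i]).
Variable F : 'rV[R[i]]_(r + s) -> A -> A.
Hypothesis hFlin : forall (c : R[i]) (x y : 'rV[R[i]]_(r + s)) (b : A),
             F (c *: x + y) b = c *: F x b + F y b.
Hypothesis hFder : forall x, is_derivation (F x).
Hypothesis hFlie : forall x y, lieb (F x) (F y) = F 0.

Lemma F0 b : F 0 b = 0.
Proof.
have := hFlin 1 0 0 b; rewrite !scale1r addr0 => /eqP.
by rewrite eq_sym -subr_eq0 addrK => /eqP.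
Qed.

Lemma FZ c x b : F (c *: x) b = c *: F x b.
Proof. by have := hFlin c x 0 b; rewrite addr0 F0 addr0. Qed.

Lemma FD x y b : F (x + y) b = F x b + F y b.
Proof. by have := hFlin 1 x y b; rewrite !scale1r. Qed.

Lemma FB c d x y b : F (c *: x - d *: y) b = c *: F x b - d *: F y b.
Proof. by rewrite FD -scaleNr !FZ scaleNr. Qed.

Lemma Fcomm x y b : F x (F y b) = F y (F x b).
Proof.
have := congr1 (fun f => f b) (hFlie x y); rewrite /lieb /= F0 => /eqP.
by rewrite subr_eq0 => /eqP.
Qed.

Lemma Fmul x a b : F x (a * b) = a * F x b + F x a * b.
Proof. by case: (hFder x). Qed.

Lemma bracket x y (u w : A) (l m : R[i]) :
  F x w = l *: w -> F y u = m *: u ->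
  lieb (mulop u (F x)) (mulop w (F y)) = mulop (u * w) (F (l *: y - m *: x)).
Proof.
move=> hw hu; apply: functional_extensionality_dep => b.
rewrite /lieb /mulop FB !Fmul hw hu Fcomm.
rewrite !mulrDr -!scalerAl !scalerAr !mulrA (mulrC w u) mulrN.
by rewrite opprD addrA (addrAC (u * w * _)) subrr add0r.
Qed.


Local Notation vec := 'rV[R[i]]_(r + s).

Lemma F1 x : F x 1 = 0.
Proof.
have := Fmul x 1 1; rewrite !mul1r mulr1 => /eqP.
by rewrite eq_sym -subr_eq0 addrK => /eqP.
Qed.

Lemma weight_inv (u ui : A) (phi : vec -> R[i]) :
  u * ui = 1 -> (forall x, F x u = phi x *: u) ->
  forall x, F x ui = (- phi x) *: ui.
Proof.
move=> hui hu x.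
have h : u * F x ui = - (phi x *: 1).
  have := Fmul x u ui; rewrite hu -scalerAl hui F1 => /eqP.
  by rewrite eq_sym addr_eq0 => /eqP.
transitivity (ui * (u * F x ui)); first by rewrite mulrA (mulrC ui u) hui mul1r.
by rewrite h mulrN -scalerAr mulr1 scaleNr.
Qed.

Lemma weight_pow (u w : A) (phi psi : vec -> R[i]) p n :
  F p u = phi p *: u -> F p w = psi p *: w ->
  F p (u ^+ n * w) = (n%:R * phi p + psi p) *: (u ^+ n * w).
Proof.
move=> hu hw; elim: n => [|n IH]; first by rewrite expr0 mul1r mul0r add0r.
rewrite exprS -mulrA Fmul IH hu -scalerAl -scalerAr -scalerDl; congr (_ *: _).
by rewrite mulrSr mulrDl mul1r addrAC.
Qed.

Fixpoint ee (phi psi : vec -> R[i]) (p q : vec) (n : nat) : vec :=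
  match n with
  | 0 => q
  | n'.+1 => (n'%:R * phi p + psi p) *: ee phi psi p q n' - phi (ee phi psi p q n') *: p
  end.

Lemma iter_br (u w : A) (phi psi : vec -> R[i]) p q :
  (forall x, F x u = phi x *: u) -> (forall x, F x w = psi x *: w) ->
  forall n, iter n (lieb (mulop u (F p))) (mulop w (F q)) =
            mulop (u ^+ n * w) (F (ee phi psi p q n)).
Proof.
move=> hu hw; elim=> [|n IH]; first by rewrite /= expr0 mul1r.
rewrite iterS IH (bracket (l := n%:R * phi p + psi p) (m := phi (ee phi psi p q n))) //.
  by rewrite mulrA -exprS.
exact: weight_pow.
Qed.

Lemma ee_xy (phi psi : vec -> R[i]) p q
  (phil : forall k1 k2 x y, phi (k1 *: x + k2 *: y) = k1 * phi x + k2 * phi y) n :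
  ee phi psi p q n = (xy (phi p) (psi p) (phi q) n).1 *: q
                     + (xy (phi p) (psi p) (phi q) n).2 *: p.
Proof.
elim: n => [|n IH] /=; first by rewrite scale1r scale0r addr0.
case: (xy _ _ _ n) IH => x y /= ->; rewrite phil.
by rewrite scalerDr !scalerA scalerBl addrA.
Qed.

Lemma ee_zero (phi psi : vec -> R[i]) p q n
  (phil : forall k1 k2 x y, phi (k1 *: x + k2 *: y) = k1 * phi x + k2 * phi y) :
  xy (phi p) (psi p) (phi q) n = (0, 0) -> ee phi psi p q n = 0.
Proof. by move=> h; rewrite ee_xy // h /= !scale0r addr0. Qed.


Lemma iter_zero (u w : A) (phi psi : vec -> R[i]) p q n :
  (forall x, F x u = phi x *: u) -> (forall x, F x w = psi x *: w) ->
  (forall k1 k2 x y, phi (k1 *: x + k2 *: y) = k1 * phi x + k2 * phi y) ->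
  xy (phi p) (psi p) (phi q) n = (0, 0) ->
  iter n (lieb (mulop u (F p))) (mulop w (F q)) = @zeroop _ A.
Proof.
move=> hu hw phil hxy; rewrite (iter_br p q hu hw) ee_zero //.
by apply: functional_extensionality_dep => b; rewrite /mulop /zeroop F0 mulr0.
Qed.

Variables (N : 'M[int]_r) (v vinv : 'I_r -> A).
Hypothesis hal : forall i j : 'I_r, al j (lshift s i) = (N i j)%:~R.
Hypothesis hvinv : forall i, v i * vinv i = 1.
Hypothesis hv : forall (x : vec) (i : 'I_r), F x (v i) = alphaf al i x *: v i.

Lemma alphaf_lin t k1 k2 (x y : vec) :
  alphaf al t (k1 *: x + k2 *: y) = k1 * alphaf al t x + k2 * alphaf al t y.
Proof. by rewrite /alphaf mulmxDl -!scalemxAl !mxE. Qed.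

Lemma alphaf_basis t a : alphaf al t (hbasis R[i] a) = al t a.
Proof. by rewrite /alphaf /hbasis -rowE !mxE. Qed.

Lemma vne0 t : v t != 0.
Proof. by apply/eqP => e; move: (hvinv t); rewrite e mul0r => /eqP; rewrite eq_sym oner_eq0. Qed.

Lemma hvi x i : F x (vinv i) = (- alphaf al i x) *: vinv i.
Proof. exact: (weight_inv (hvinv i) (fun y => hv y i)). Qed.

Lemma br_pm i j p m :
  lieb (mulop (v i) (F p)) (mulop (vinv j) (F m)) =
  mulop (v i * vinv j) (F ((- alphaf al j p) *: m - alphaf al i m *: p)).
Proof. by apply: bracket; [apply: hvi | apply: hv]. Qed.

Lemma off_rel i j p m t :
  lieb (mulop (v i) (F p)) (mulop (vinv j) (F m)) = @zeroop _ A ->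
  (- alphaf al j p) * alphaf al t m - alphaf al i m * alphaf al t p = 0.
Proof.
rewrite br_pm => h; have := congr1 (fun f => f (v t)) h.
rewrite /mulop /zeroop /= hv => e.
have u1 : vinv i * v j * (v i * vinv j) = 1.
  by rewrite mulrACA (mulrC (vinv i)) !hvinv mulr1.
have e2 : alphaf al t ((- alphaf al j p) *: m - alphaf al i m *: p) *: v t = 0.
  by rewrite -[LHS]mul1r -u1 -(mulrA (vinv i * v j)) e mulr0.
move/eqP: e2; rewrite scaler_eq0 (negbTE (vne0 t)) orbF => /eqP.
rewrite -scaleNr alphaf_lin => e3; apply: (etrans _ e3); ring.
Qed.

Lemma diag_rel i p m t :
  lieb (mulop (v i) (F p)) (mulop (vinv i) (F m)) = F (hbasis R[i] (lshift s i)) ->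
  (- alphaf al i p) * alphaf al t m - alphaf al i m * alphaf al t p = (N i t)%:~R.
Proof.
rewrite br_pm hvinv => h; have := congr1 (fun f => f (v t)) h.
rewrite /mulop /= mul1r !hv => e.
have e2 : (alphaf al t ((- alphaf al i p) *: m - alphaf al i m *: p)
           - alphaf al t (hbasis R[i] (lshift s i))) *: v t = 0.
  by rewrite scalerBl e subrr.
move/eqP: e2; rewrite scaler_eq0 (negbTE (vne0 t)) orbF subr_eq0 => /eqP.
rewrite alphaf_basis hal -scaleNr alphaf_lin => <-; ring.
Qed.

Lemma serre_pair (hN : gen_cartan N) i j pi pj mi mj : i != j ->
  lieb (mulop (v i) (F pi)) (mulop (vinv i) (F mi)) = F (hbasis R[i] (lshift s i)) ->
  lieb (mulop (v j) (F pj)) (mulop (vinv j) (F mj)) = F (hbasis R[i] (lshift s j)) ->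
  lieb (mulop (v i) (F pi)) (mulop (vinv j) (F mj)) = @zeroop _ A ->
  lieb (mulop (v j) (F pj)) (mulop (vinv i) (F mi)) = @zeroop _ A ->
  iter `|1 - N i j|%N (lieb (mulop (v i) (F pi))) (mulop (v j) (F pj)) = @zeroop _ A /\
  iter `|1 - N i j|%N (lieb (mulop (vinv i) (F mi))) (mulop (vinv j) (F mj)) = @zeroop _ A.
Proof.
case: hN => hNd [_ hNz] hij Hii Hjj Hij Hji.
have h1 := off_rel j Hij; have h2 := off_rel i Hij.
have h3 := off_rel i Hji; have h4 := off_rel j Hji.
have h5 := diag_rel i Hii; have h6 := diag_rel j Hii.
have h7 := diag_rel j Hjj; have h6' := diag_rel i Hjj.
rewrite hNd in h5; rewrite hNd in h7.
have C1 := cases_lemma h1 h2 h3 h4 h5 h6 h7.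
have C2 := cases_lemma h3 h4 h1 h2 h7 h6' h5.
have phiP := alphaf_lin i.
have phiM : forall k1 k2 (x y : vec), (fun z => - alphaf al i z) (k1 *: x + k2 *: y)
   = k1 * (fun z => - alphaf al i z) x + k2 * (fun z => - alphaf al i z) y.
  by move=> k1 k2 x y; rewrite /= alphaf_lin opprD !mulrN.
have ZP := fun n => @iter_zero (v i) (v j) (alphaf al i) (alphaf al j) pi pj n
                      (fun x => hv x i) (fun x => hv x j) phiP.
have ZM := fun n => @iter_zero (vinv i) (vinv j) (fun z => - alphaf al i z)
                      (fun z => - alphaf al j z) mi mj n
                      (fun x => hvi x i) (fun x => hvi x j) phiM.
case: C1 => [[eP eM en]|[eP eP' eM en]|[eP eM eM' en]|[eP eM en]].
- rewrite (kv3 en); split; [apply: ZP; apply: xy3 | apply: ZM; apply: xy3] => //=.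
  by rewrite eM.
- rewrite (kv2 en); split; [apply: ZP; apply: xy2 | apply: ZM; apply: xy2] => /=.
    by right.
  by left; rewrite eM oppr0.
- rewrite (kv2 en); split; [apply: ZP; apply: xy2 | apply: ZM; apply: xy2] => /=.
    by left.
  by right; rewrite eM eM' oppr0.
- have eN := kv0 en.
  have enji : (N j i)%:~R = 0 :> R[i] by rewrite (proj1 (hNz i j) eN).
  case: C2 => [[_ _ en']|[_ _ _ en']|[_ _ _ en']|[eP' eM' _]].
  + by move: (m2nz R[i]); rewrite -en' enji eqxx.
  + by move: (m1nz R[i]); rewrite -en' enji eqxx.
  + by move: (m1nz R[i]); rewrite -en' enji eqxx.
  rewrite eN; split; [apply: ZP; apply: xy1 | apply: ZM; apply: xy1] => //=.
  + by rewrite eM oppr0.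
  + by rewrite eM' oppr0.
Qed.

End Aux.

Unset Implicit Arguments.

Theorem corollary3p13
  (R : realType) (r s : nat) (N : 'M[int]_r)
  (hN : gen_cartan N)
  (hs : s = (r - \rank (map_mx (fun z : int => z%:~R : R[i]) N))%N)
  (al : 'M[R[i]]_(r, r + s))
  (hal_free : row_free al)
  (hal : forall i j : 'I_r, al j (lshift s i) = (N i j)%:~R)
  (A : comAlgType R[i])
  (F : 'rV[R[i]]_(r + s) -> A -> A)
  (hFlin : forall (c : R[i]) (x y : 'rV[R[i]]_(r + s)) (b : A),
             F (c *: x + y) b = c *: F x b + F y b)
  (hFder : forall x, is_derivation (F x))
  (hFlie : forall x y, lieb (F x) (F y) = F 0)
  (v vinv : 'I_r -> A)
  (hvinv : forall i, v i * vinv i = 1)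
  (hv : forall (x : 'rV[R[i]]_(r + s)) (i : 'I_r),
          F x (v i) = alphaf al i x *: v i) :
  Problem1 N al F v vinv <-> Problem2 al F v vinv.
Proof.
split.
  by case=> dp [dm [hd [habc _]]]; exists dp, dm.
case=> dp [dm [[hdp hdm] habc]]; exists dp, dm; split; first by [].
split; first by [].
case: habc => _ [hb1 [hb2 _]].
have key : forall i j, i != j ->
   iter `|1 - N i j|%N (lieb (Xp v dp i)) (Xp v dp j) = @zeroop _ A /\
   iter `|1 - N i j|%N (lieb (Xm vinv dm i)) (Xm vinv dm j) = @zeroop _ A.
  move=> i j hij.
  have [pi Epi] := hdp i; have [pj Epj] := hdp j.
  have [mi Emi] := hdm i; have [mj Emj] := hdm j.
  have Hii := hb1 i; have Hjj := hb1 j; have Hij := hb2 i j hij.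
  have hji : j != i by rewrite eq_sym.
  have Hji := hb2 j i hji.
  move: Hii Hjj Hij Hji; rewrite /Xp /Xm /HH Epi Epj Emi Emj => Hii Hjj Hij Hji.
  exact: (serre_pair hFlin hFder hFlie hal hvinv hv hN hij Hii Hjj Hij Hji).
by split => i j hij; case: (key i j hij).
Qed.
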